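(* An $[n,k]_q$ code $C$ is GI-reducible if and only if $C$ is LCD, or $\dim(\mathrm{Hull}(C)) = 1$ and $x \in \mathrm{Hull}(C)$ satisfies $(x,\mathbf{1}) \neq 0$.
   Context: Let $\mathbb{F}_q$ be a finite field and $C \subseteq \mathbb{F}_q^n$ a linear $[n,k]_q$ code. $(x,y)=\sum_i x_i y_i$ denotes the standard inner product, $\mathbf{1}$ the all-ones vector, $C^\perp$ the dual code with respect to the standard inner product, and $\mathrm{Hull}(C) = C \cap C^\perp$ the hull of $C$; $C$ is LCD if $\mathrm{Hull}(C)=\{0\}$. For a nondegenerate symmetric matrix $M$, a code $C$ with generator matrix $G$ is $M$-LCD if $GMG^T$ is nonsingular, and then $\Pi_{C,M} = MG^T(GMG^T)^{-1}G$ is its $M$-orthogonal projector. Two codes are permutation-equivalent ($C_1 \cong C_2$) if $C_2 = C_1P$ for a permutation matrix $P$, and $\Pi_{C_1,M} \cong \Pi_{C_2,M}$ means $\Pi_{C_2,M} = P^T\Pi_{C_1,M}P$ for some permutation matrix $P$. Let $J$ be the all-ones matrix. A code $C$ is called GI-reducible if there exists a nondegenerate symmetric structure matrix $M = aI + bJ$ (i.e. $a \neq 0$ and $a+nb \neq 0$ in $\mathbb{F}_q$) such that every code in the permutation class of $C$ is $M$-LCD and $C_1 \cong C_2 \iff \Pi_{C_1,M} \cong \Pi_{C_2,M}$ holds for all $C_1, C_2$ in that class. *)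

(* Defs.v *)
From HB Require Import structures.
From mathcomp Require Import all_boot all_order all_algebra all_fingroup.
Set Implicit Arguments. Unset Strict Implicit. Unset Printing Implicit Defensive.
Import GRing.Theory.
Local Open Scope ring_scope.

(* A linear [n,k]_q code C is represented by a generator matrix G : 'M[F]_(k,n)
   of full row rank (row_free G); the code itself is the row space of G. *)

Definition ip (F : fieldType) (n : nat) (x y : 'rV[F]_n) : F := (x *m y^T) 0 0.

Definition ones (F : fieldType) (n : nat) : 'rV[F]_n := const_mx 1.

Definition dualc (F : fieldType) (k n : nat) (G : 'M[F]_(k, n)) : 'M[F]_n :=
  kermx G^T.
Definition hull (F : fieldType) (k n : nat) (G : 'M[F]_(k, n)) : 'M[F]_n :=
  (G :&: dualc G)%MS.

Definition LCD (F : fieldType) (k n : nat) (G : 'M[F]_(k, n)) : Prop :=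
  hull G = 0.

Definition structM (F : fieldType) (n : nat) (a b : F) : 'M[F]_n :=
  a%:M + b *: const_mx 1.

Definition M_LCD (F : fieldType) (k n : nat) (M : 'M[F]_n) (G : 'M[F]_(k, n))
  : bool := (G *m M *m G^T) \in unitmx.

Definition proj (F : fieldType) (k n : nat) (M : 'M[F]_n) (G : 'M[F]_(k, n))
  : 'M[F]_n := M *m G^T *m invmx (G *m M *m G^T) *m G.

Definition code_equiv (F : fieldType) (k n : nat) (G1 G2 : 'M[F]_(k, n)) : Prop :=
  exists s : 'S_n, (G2 == G1 *m perm_mx s)%MS.

Definition proj_equiv (F : fieldType) (n : nat) (P1 P2 : 'M[F]_n) : Prop :=
  exists s : 'S_n, P2 = (perm_mx s)^T *m P1 *m perm_mx s.

Definition GI_reducible (F : fieldType) (k n : nat) (G : 'M[F]_(k, n)) : Prop :=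
  exists a b : F,
    [/\ a != 0, a + n%:R * b != 0,
        forall s : 'S_n, M_LCD (structM n a b) (G *m perm_mx s)
      & forall s1 s2 : 'S_n,
          code_equiv (G *m perm_mx s1) (G *m perm_mx s2) <->
          proj_equiv (proj (structM n a b) (G *m perm_mx s1))
                     (proj (structM n a b) (G *m perm_mx s2))].

(* Main.v *)
Require Import Defs.
From HB Require Import structures.
From mathcomp Require Import all_boot all_order all_algebra all_fingroup.
From mathcomp Require Import zify.
Import GRing.Theory.
Local Open Scope ring_scope.

Section S.
Set Implicit Arguments. Unset Strict Implicit.
Variable F : fieldType.

Lemma structM_perm n (a b : F) (s : 'S_n) :
  structM n a b *m perm_mx s = perm_mx s *m structM n a b.
Proof.
have h1 : const_mx 1 *m perm_mx s = const_mx 1 :> 'M[F]_n.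
  by rewrite -{1}(invgK s) -col_permE col_perm_const.
have h2 : perm_mx s *m const_mx 1 = const_mx 1 :> 'M[F]_n.
  by rewrite -row_permE row_perm_const.
rewrite /structM mulmxDl mulmxDr -!scalemxAl -!scalemxAr h1 h2.
by rewrite mul_scalar_mx mul_mx_scalar.
Qed.

Lemma perm_tr n (s : 'S_n) : perm_mx s *m (perm_mx s)^T = 1%:M :> 'M[F]_n.
Proof. by rewrite tr_perm_mx -perm_mxM mulgV perm_mx1. Qed.

Lemma perm_tr' n (s : 'S_n) : (perm_mx s)^T *m perm_mx s = 1%:M :> 'M[F]_n.
Proof. by rewrite tr_perm_mx -perm_mxM mulVg perm_mx1. Qed.

Lemma GMGT_perm k n (a b : F) (G : 'M[F]_(k, n)) (s : 'S_n) :
  G *m perm_mx s *m structM n a b *m (G *m perm_mx s)^T = G *m structM n a b *m G^T.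
Proof.
rewrite trmx_mul -!mulmxA; congr (G *m _).
by rewrite mulmxA -structM_perm -mulmxA (mulmxA (perm_mx s)) perm_tr mul1mx.
Qed.

Lemma proj_perm k n (a b : F) (G : 'M[F]_(k, n)) (s : 'S_n) :
  proj (structM n a b) (G *m perm_mx s) = (perm_mx s)^T *m proj (structM n a b) G *m perm_mx s.
Proof.
rewrite /proj GMGT_perm trmx_mul !mulmxA; congr (_ *m _ *m _ *m _).
by rewrite tr_perm_mx structM_perm.
Qed.

Lemma J_decomp n : const_mx 1 = (ones F n)^T *m ones F n :> 'M[F]_n.
Proof. by apply/matrixP => i j; rewrite !mxE big_ord1 !mxE mulr1. Qed.

Lemma B_decomp k n (a b : F) (G : 'M[F]_(k, n)) :
  G *m structM n a b *m G^T =
  a *: (G *m G^T) + b *: ((G *m (ones F n)^T) *m (G *m (ones F n)^T)^T).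
Proof.
rewrite /structM J_decomp mulmxDr mulmxDl mul_mx_scalar -!scalemxAl -scalemxAr.
by rewrite trmx_mul trmxK !mulmxA -scalemxAl.
Qed.

Lemma rank_hull k n (G : 'M[F]_(k, n)) : row_free G ->
  (\rank (G *m G^T) + \rank (hull G))%N = k.
Proof. by move=> /eqP rG; rewrite /hull /dualc mxrank_mul_ker. Qed.

Lemma ker_unit k (B : 'M[F]_k) : (forall w : 'rV_k, w *m B = 0 -> w = 0) -> B \in unitmx.
Proof.
move=> H; rewrite -row_free_unit -kermx_eq0; apply/eqP/row_matrixP => i.
by rewrite row0; apply: H; rewrite -row_mul mulmx_ker row0.
Qed.

Lemma hull_sub k n (G : 'M[F]_(k, n)) (y : 'rV_n) :
  (y <= hull G)%MS = (y <= G)%MS && (y *m G^T == 0).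
Proof. by rewrite /hull /dualc sub_capmx sub_kermx. Qed.

Lemma ip_mx n (x : 'rV[F]_n) : x *m (ones F n)^T = (ip x (ones F n))%:M.
Proof. by apply/matrixP => i j; rewrite !ord1 [RHS]mxE eqxx mulr1n. Qed.

Lemma reverse k n (a b : F) (G : 'M[F]_(k, n)) : row_free G ->
  G *m structM n a b *m G^T \in unitmx ->
  (LCD G \/
   (\rank (hull G) = 1%N /\
    exists x : 'rV[F]_n, (x <= hull G)%MS /\ x != 0 /\ ip x (ones F n) != 0)).
Proof.
move=> rG uB.
have rkB := mxrank_unit uB.
have rh := rank_hull rG.
set u := G *m (ones F n)^T.
have le1 : (\rank (G *m structM n a b *m G^T) <= \rank (G *m G^T) + 1)%N.
  rewrite B_decomp; apply: leq_trans (mxrank_add _ _) _; apply: leq_add.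
    by apply: mxrankS; apply: scalemx_sub.
  apply: leq_trans (mxrankS (scalemx_sub _ (submx_refl _))) _.
  exact: leq_trans (mxrankM_maxl _ _) (rank_leq_col _).
have [h0|hn0] := eqVneq (\rank (hull G)) 0%N.
  by left; apply/eqP; rewrite -mxrank_eq0 h0.
right; split; first by move: hn0 le1; rewrite rkB; lia.
have [/existsP [i Hi]|Hn] := boolP [exists i, row i (hull G) != 0].
  exists (row i (hull G)); split; first exact: row_sub.
  split => //.
  apply/negP => /eqP ip0.
  have := row_sub i (hull G); rewrite hull_sub => /andP [/submxP [D eD] /eqP xG].
  have : D *m (G *m structM n a b *m G^T) = 0.
    rewrite B_decomp mulmxDr -!scalemxAr !mulmxA -eD xG scaler0 add0r.
    by rewrite ip_mx ip0 mul_scalar_mx !scale0r scaler0.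
  move/(congr1 (mulmx^~ (invmx (G *m structM n a b *m G^T)))).
  rewrite mulmxK // mul0mx => D0.
  by move: Hi; rewrite eD D0 mul0mx eqxx.
exfalso; move: hn0; rewrite mxrank_eq0; apply/negP; rewrite negbK.
apply/eqP/row_matrixP => i; rewrite row0; apply/eqP.
by move: Hn; rewrite negb_exists => /forallP /(_ i); rewrite negbK.
Qed.

Lemma forward1 k n (b : F) (G : 'M[F]_(k, n)) (x : 'rV[F]_n) : row_free G -> b != 0 ->
  \rank (hull G) = 1%N -> (x <= hull G)%MS -> x != 0 -> ip x (ones F n) != 0 ->
  G *m structM n 1 b *m G^T \in unitmx.
Proof.
move=> rG b0 rh xh x0 ip0.
have := xh; rewrite hull_sub => /andP [/submxP [v ev] /eqP xG].
apply: ker_unit => w; rewrite B_decomp scale1r.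
set u := G *m (ones F n)^T => Hw.
have Av : G *m G^T *m v^T = 0.
  by rewrite -mulmxA -trmx_mul -ev -[G in G *m _]trmxK -trmx_mul xG trmx0.
have uv : u^T *m v^T = (ip x (ones F n))%:M.
  by rewrite -trmx_mul /u mulmxA -ev ip_mx tr_scalar_mx.
have wu : w *m u = 0.
  move/(congr1 (mulmx^~ v^T)): Hw.
  rewrite mul0mx mulmxDr mulmxDl -(mulmxA w (G *m G^T)) Av mulmx0 add0r.
  rewrite -scalemxAr -scalemxAl -(mulmxA w (u *m u^T)) -(mulmxA u) uv mulmxA mul_mx_scalar scalerA.
  by move/eqP; rewrite scalemx_eq0 mulf_eq0 (negbTE b0) (negbTE ip0) /= => /eqP.
move: Hw; rewrite mulmxDr -scalemxAr (mulmxA w u) wu mul0mx scaler0 addr0 mulmxA => wA.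
have wh : (w *m G <= hull G)%MS by rewrite hull_sub submxMl wA eqxx.
have hx : (hull G <= x)%MS.
  by rewrite -(mxrank_leqif_sup xh).2 rank_rV x0 rh.
have /sub_rVP [c ec] := submx_trans wh hx.
have ew : w = c *: v by apply: (row_free_inj rG); rewrite ec ev scalemxAl.
apply/eqP; move: wu; rewrite ew -scalemxAl /u mulmxA -ev ip_mx scale_scalar_mx.
move/matrixP/(_ 0 0); rewrite !mxE eqxx mulr1n => /eqP.
rewrite mulf_eq0 (negbTE ip0) orbF => /eqP ->; by rewrite scale0r.
Qed.

Lemma forward0 k n (G : 'M[F]_(k, n)) : row_free G -> LCD G ->
  G *m structM n 1 0 *m G^T \in unitmx.
Proof.
move=> rG L; rewrite B_decomp scale1r scale0r addr0 -row_free_unit.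
by have := rank_hull rG; rewrite /row_free L mxrank0 addn0 => ->.
Qed.
End S.

Lemma GI_iff (F : fieldType) k n (a b : F) (G : 'M[F]_(k, n)) (s1 s2 : 'S_n) :
  code_equiv (G *m perm_mx s1) (G *m perm_mx s2) <->
  proj_equiv (proj (structM n a b) (G *m perm_mx s1))
             (proj (structM n a b) (G *m perm_mx s2)).
Proof.
split=> _; exists (s1^-1 * s2)%g.
  have e2 : perm_mx s2 = perm_mx s1 *m perm_mx (s1^-1 * s2)%g :> 'M[F]_n by rewrite -perm_mxM mulKVg.
  by rewrite !proj_perm e2 trmx_mul !mulmxA.
by rewrite -mulmxA -perm_mxM mulKVg !submx_refl.
Qed.

Theorem mainTheorem2 (F : finFieldType) (n k : nat) (G : 'M[F]_(k, n)) :
  row_free G ->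
  GI_reducible G <->
  (LCD G \/
   (\rank (hull G) = 1%N /\
    exists x : 'rV[F]_n, (x <= hull G)%MS /\ x != 0 /\ ip x (ones F n) != 0)).
Proof.
move=> rG; split.
  case=> a [b [_ _ /(_ 1%g) H _]].
  by apply: (reverse (a := a) (b := b)) => //; move: H; rewrite /M_LCD perm_mx1 mulmx1.
case=> [L | [rh [x [xh [x0 ip0]]]]].
  exists 1, 0; split; rewrite ?mulr0 ?addr0 ?oner_neq0 //.
    by move=> s; rewrite /M_LCD GMGT_perm forward0.
  by move=> s1 s2; apply: GI_iff.
have [/existsP [b /andP [b0 nb0]] | Hn] := boolP [exists b : F, (b != 0) && (1 + n%:R * b != 0)].
  exists 1, b; split; rewrite ?oner_neq0 //.
    by move=> s; rewrite /M_LCD GMGT_perm (forward1 rG b0 rh xh x0 ip0).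
  by move=> s1 s2; apply: GI_iff.
exfalso.
have Hb : forall y : F, y != 0 -> 1 + n%:R * y = 0.
  move=> y y0; apply/eqP; move: Hn; rewrite negb_exists => /forallP /(_ y).
  by rewrite y0 /= negbK.
have h1 := Hb 1 (oner_neq0 _).
have nz : n%:R != 0 :> F.
  by apply/eqP => n0; move: h1; rewrite n0 mul0r addr0 => /eqP; rewrite oner_eq0.
have idem : forall y : F, y * y = y.
  move=> y; have [->|y0] := eqVneq y 0; first by rewrite mulr0.
  have : n%:R * y = n%:R * 1 :> F.
    by apply: (addrI 1); rewrite Hb // h1.
  by move/(mulfI nz) ->; rewrite mulr1.
have := xh; rewrite hull_sub => /andP [/submxP [v ev] /eqP xG].
have xx : x *m x^T = 0.
  by rewrite {1}ev -mulmxA -[G in G *m x^T]trmxK -trmx_mul xG trmx0 mulmx0.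
move: ip0; rewrite /ip.
have -> : x *m (ones F n)^T = x *m x^T.
  apply/matrixP => i j; rewrite !mxE; apply: eq_bigr => l _.
  by rewrite !mxE mulr1 !ord1 idem.
by rewrite xx mxE eqxx.
Qed.
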